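(* Let $M\ge1$ and $b\ge1$ be integers and let $\tilde P_{\max}>0$, $\rho_a,\rho_q>0$, $\sigma_a^2,\sigma_q^2>0$. For nonnegative integers $n_a,n_q$ define $$\mathrm{MSE}(n_a,n_q)=M-M\Big(\frac{\rho_a n_a}{\rho_a n_a+\sigma_a^2}+\frac{2\rho_q n_q\sigma_a^4}{\pi(\rho_q+\sigma_q^2)(\alpha+\beta(n_a)\rho_q n_q)(\rho_a n_a+\sigma_a^2)^2}\Big),$$ where $\alpha=\frac{2}{\pi}\arccos\!\big(\frac{\rho_q}{\rho_q+\sigma_q^2}\big)$ and $\beta(n_a)=\frac{2}{\pi}\arcsin\!\big(\frac{\rho_q}{\rho_q+\sigma_q^2}\big)\frac{1}{\rho_q}-\frac{2\rho_a n_a}{\pi(\rho_q+\sigma_q^2)(\rho_a n_a+\sigma_a^2)}$. Consider the problem $$\min_{n_a,n_q}\ \mathrm{MSE}(n_a,n_q)\quad\text{s.t.}\quad 2^bMn_a+2Mn_q\le\tilde P_{\max},\ \ n_a,n_q\in\mathbb Z_+ .$$ Then this problem can be solved by a one-dimensional search over $n_a\in\{0,1,\dots,\lfloor \tilde P_{\max}/(2^bM)\rfloor\}$, where for each such $n_a$ one takes $n_q=\big\lfloor(\tilde P_{\max}-2^bMn_a)/(2M)\big\rfloor$; that is, the minimum of $\mathrm{MSE}(n_a,\lfloor(\tilde P_{\max}-2^bMn_a)/(2M)\rfloor)$ over these values of $n_a$ is attained at an optimal solution of the problem.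
   Context: $\mathbb Z_+$ denotes the set of nonnegative integers; $\lfloor\cdot\rfloor$ is the floor function. The function $\mathrm{MSE}(n_a,n_q)$ is the mean-squared error of the LMMSE estimator in a mixed-resolution linear Gaussian orthonormal measurement model with $Mn_a$ analog and $Mn_q$ 1-bit quantized measurements, and the constraint models a total ADC power budget with $b$-bit high-resolution ADCs. *)

(* Defs.v *)
From Stdlib Require Import Reals Lra Lia.
Open Scope R_scope.

(* floor of a real, as an integer: Int_part x = up x - 1 = floor x *)
Definition floorZ (x : R) : Z := Int_part x.

Definition alpha_q (rq sq2 : R) : R := 2 / PI * acos (rq / (rq + sq2)).

Definition beta_q (ra rq sa2 sq2 : R) (na : nat) : R :=
  2 / PI * asin (rq / (rq + sq2)) * / rq
  - 2 * ra * INR na / (PI * (rq + sq2) * (ra * INR na + sa2)).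

Definition MSE (M : nat) (ra rq sa2 sq2 : R) (na nq : nat) : R :=
  INR M - INR M *
   (ra * INR na / (ra * INR na + sa2)
    + 2 * rq * INR nq * sa2 ^ 2 /
      (PI * (rq + sq2) * (alpha_q rq sq2 + beta_q ra rq sa2 sq2 na * rq * INR nq)
          * (ra * INR na + sa2) ^ 2)).

Definition feasible (M b : nat) (P : R) (na nq : nat) : Prop :=
  2 ^ b * INR M * INR na + 2 * INR M * INR nq <= P.

Definition na_max (M b : nat) (P : R) : Z := floorZ (P / (2 ^ b * INR M)).

Definition nq_of (M b : nat) (P : R) (na : nat) : nat :=
  Z.to_nat (floorZ ((P - 2 ^ b * INR M * INR na) / (2 * INR M))).

(* Main.v *)
Require Import Defs.
From Stdlib Require Import Reals.
From Stdlib Require Import Lra Lia ZArith Ratan.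
Open Scope R_scope.

Lemma floor_ge (k : Z) (x : R) : IZR k <= x -> (k <= Int_part x)%Z.
Proof.
  intros H. destruct (base_Int_part x) as [_ H2].
  assert (IZR (k - 1) < IZR (Int_part x)) by (rewrite minus_IZR; lra).
  apply lt_IZR in H0. lia.
Qed.

Lemma floor_le (x : R) : IZR (Int_part x) <= x.
Proof. apply base_Int_part. Qed.

Lemma asin_gt (r : R) : 0 < r -> r < 1 -> r < asin r.
Proof.
  intros h0 h1.
  destruct (asin_bound r) as [b1 b2].
  destruct (Rle_or_lt (asin r) 0) as [Hle|Hgt].
  - assert (sin (asin r) <= sin 0).
    { pose proof PI_RGT_0. apply sin_incr_1; lra. }
    rewrite sin_asin in H by lra. rewrite sin_0 in H. lra.
  - pose proof (sin_lt_x _ Hgt). rewrite sin_asin in H by lra. exact H.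
Qed.

Lemma alpha_pos rq sq2 : 0 < rq -> 0 < sq2 -> 0 < alpha_q rq sq2.
Proof.
  intros h1 h2. unfold alpha_q.
  assert (0 < rq / (rq + sq2) < 1).
  { split. apply Rdiv_lt_0_compat; lra.
    apply (Rmult_lt_reg_r (rq + sq2)); [lra|]. unfold Rdiv.
    rewrite Rmult_assoc, Rinv_l by lra. lra. }
  destruct (acos_bound_lt (rq / (rq + sq2))) as [a _]; [lra|].
  pose proof PI_RGT_0.
  apply Rmult_lt_0_compat; [|exact a]. apply Rdiv_lt_0_compat; lra.
Qed.

Lemma beta_pos ra rq sa2 sq2 na : 0 < ra -> 0 < rq -> 0 < sa2 -> 0 < sq2 ->
  0 < beta_q ra rq sa2 sq2 na.
Proof.
  intros h1 h2 h3 h4. unfold beta_q.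
  pose proof PI_RGT_0.
  pose proof (pos_INR na).
  set (s := rq + sq2). set (u := ra * INR na).
  assert (hs : 0 < s) by (unfold s; lra).
  assert (hu : 0 <= u) by (unfold u; apply Rmult_le_pos; lra).
  set (r := rq / s).
  assert (hr : 0 < r < 1).
  { split. apply Rdiv_lt_0_compat; lra.
    apply (Rmult_lt_reg_r s); [lra|]. unfold r, Rdiv.
    rewrite Rmult_assoc, Rinv_l by lra. unfold s; lra. }
  pose proof (asin_gt r (proj1 hr) (proj2 hr)) as HA.
  set (A := asin r) in *.
  assert (E : 2 / PI * A * / rq - 2 * ra * INR na / (PI * s * (u + sa2))
     = 2 / PI * (A / rq - u / (s * (u + sa2)))).
  { unfold u in hu. unfold u. field. repeat split; lra. }
  rewrite E. apply Rmult_lt_0_compat. apply Rdiv_lt_0_compat; lra.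
  assert (A / rq > / s).
  { replace (/ s) with (r / rq) by (unfold r; field; lra).
    unfold Rdiv. apply Rmult_lt_compat_r. apply Rinv_0_lt_compat; lra. lra. }
  assert (u / (s * (u + sa2)) <= / s).
  { replace (u / (s * (u + sa2))) with (/ s * (u / (u + sa2))) by (field; lra).
    rewrite <- (Rmult_1_r (/ s)) at 2.
    apply Rmult_le_compat_l. left; apply Rinv_0_lt_compat; lra.
    apply (Rmult_le_reg_r (u + sa2)); [lra|]. unfold Rdiv.
    rewrite Rmult_assoc, Rinv_l by lra. lra. }
  lra.
Qed.

Lemma mse_mono M ra rq sa2 sq2 na n1 n2 :
  0 < ra -> 0 < rq -> 0 < sa2 -> 0 < sq2 -> (n1 <= n2)%nat ->
  MSE M ra rq sa2 sq2 na n2 <= MSE M ra rq sa2 sq2 na n1.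
Proof.
  intros h1 h2 h3 h4 hn. unfold MSE.
  pose proof (alpha_pos rq sq2 h2 h4) as ha.
  pose proof (beta_pos ra rq sa2 sq2 na h1 h2 h3 h4) as hb.
  set (a := alpha_q rq sq2) in *. set (be := beta_q ra rq sa2 sq2 na) in *.
  pose proof PI_RGT_0. pose proof (pos_INR na). pose proof (pos_INR M).
  assert (hI : INR n1 <= INR n2) by (apply le_INR; exact hn).
  pose proof (pos_INR n1).
  set (x1 := INR n1) in *. set (x2 := INR n2) in *.
  set (D := ra * INR na + sa2).
  assert (hD : 0 < D) by (unfold D; pose proof (Rmult_le_pos ra (INR na)); nra).
  set (c := be * rq). assert (hc : 0 < c) by (unfold c; nra).
  set (K := 2 * rq * sa2 ^ 2 / (PI * (rq + sq2) * D ^ 2)).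
  assert (hK : 0 < K).
  { unfold K. apply Rdiv_lt_0_compat.
    apply Rmult_lt_0_compat; [nra|]. apply pow_lt; lra.
    apply Rmult_lt_0_compat. nra. apply pow_lt; lra. }
  assert (G : forall x, 0 <= x ->
    2 * rq * x * sa2 ^ 2 / (PI * (rq + sq2) * (a + c * x) * D ^ 2)
    = K * (/ c - a / c * / (a + c * x))).
  { intros x hx. unfold K. unfold c in *. field. assert (0 <= be * rq * x) by (apply Rmult_le_pos; nra). repeat split; lra. }
  rewrite (G x1), (G x2) by lra.
  assert (/ (a + c * x2) <= / (a + c * x1)).
  { apply Rinv_le_contravar. nra. nra. }
  assert (0 < a / c) by (apply Rdiv_lt_0_compat; lra).
  assert (K * (/ c - a / c * / (a + c * x1)) <= K * (/ c - a / c * / (a + c * x2))).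
  { apply Rmult_le_compat_l; nra. }
  apply Rplus_le_compat_l. apply Ropp_le_contravar.
  apply Rmult_le_compat_l; [lra|]. lra.
Qed.

Lemma finite_min (f : nat -> R) (N : nat) :
  exists n0, (n0 <= N)%nat /\ forall n, (n <= N)%nat -> f n0 <= f n.
Proof.
  induction N as [|N IH].
  - exists 0%nat. split; [lia|]. intros n hn. replace n with 0%nat by lia. lra.
  - destruct IH as [n0 [h0 H]].
    destruct (Rle_or_lt (f n0) (f (S N))).
    + exists n0. split; [lia|]. intros n hn.
      destruct (Nat.eq_dec n (S N)); [subst; lra|]. apply H; lia.
    + exists (S N). split; [lia|]. intros n hn.
      destruct (Nat.eq_dec n (S N)); [subst; lra|].
      pose proof (H n ltac:(lia)). lra.
Qed.

Theorem proposition1 (M b : nat) (P ra rq sa2 sq2 : R)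
  (hM : (1 <= M)%nat) (hb : (1 <= b)%nat) (hP : 0 < P)
  (hra : 0 < ra) (hrq : 0 < rq) (hsa : 0 < sa2) (hsq : 0 < sq2) :
  (* the one-dimensional search has a minimizer *)
  (exists na0 : nat, (Z.of_nat na0 <= na_max M b P)%Z /\
     forall na : nat, (Z.of_nat na <= na_max M b P)%Z ->
       MSE M ra rq sa2 sq2 na0 (nq_of M b P na0)
         <= MSE M ra rq sa2 sq2 na (nq_of M b P na)) /\
  (* every minimizer of the search yields an optimal solution of the problem *)
  (forall na0 : nat, (Z.of_nat na0 <= na_max M b P)%Z ->
     (forall na : nat, (Z.of_nat na <= na_max M b P)%Z ->
       MSE M ra rq sa2 sq2 na0 (nq_of M b P na0)
         <= MSE M ra rq sa2 sq2 na (nq_of M b P na)) ->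
     feasible M b P na0 (nq_of M b P na0) /\
     forall na nq : nat, feasible M b P na nq ->
       MSE M ra rq sa2 sq2 na0 (nq_of M b P na0) <= MSE M ra rq sa2 sq2 na nq).
Proof.
  assert (hMr : 1 <= INR M) by (apply (le_INR 1); exact hM).
  assert (h2b : 0 < 2 ^ b) by (apply pow_lt; lra).
  set (W := 2 ^ b * INR M).
  assert (hW : 0 < W) by (unfold W; nra).
  assert (hmax : (0 <= na_max M b P)%Z).
  { unfold na_max, floorZ. apply floor_ge. fold W.
    apply Rlt_le. apply Rdiv_lt_0_compat; lra. }
  assert (feas : forall na, (Z.of_nat na <= na_max M b P)%Z ->
            feasible M b P na (nq_of M b P na)).
  { intros na hna. unfold feasible, nq_of, floorZ.
    apply IZR_le in hna. unfold na_max, floorZ in hna.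
    pose proof (floor_le (P / (2 ^ b * INR M))) as Hf. fold W in Hf, hna.
    rewrite <- INR_IZR_INZ in hna.
    assert (hx : INR na <= P / W) by lra.
    assert (hWn : W * INR na <= P).
    { apply (Rmult_le_compat_l W) in hx; [|lra].
      replace (W * (P / W)) with P in hx by (field; lra). lra. }
    fold W.
    set (y := (P - W * INR na) / (2 * INR M)).
    assert (hy : 0 <= y) by (unfold y; apply Rmult_le_pos; [lra| left; apply Rinv_0_lt_compat; lra]).
    assert (hF : (0 <= Int_part y)%Z) by (apply floor_ge; exact hy).
    rewrite (INR_IZR_INZ (Z.to_nat _)), Z2Nat.id by exact hF.
    pose proof (floor_le y).
    assert (2 * INR M * IZR (Int_part y) <= 2 * INR M * y)
      by (apply Rmult_le_compat_l; lra).
    replace (2 * INR M * y) with (P - W * INR na) in H0 by (unfold y; field; lra).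
    lra. }
  split.
  - destruct (finite_min (fun na => MSE M ra rq sa2 sq2 na (nq_of M b P na))
        (Z.to_nat (na_max M b P))) as [n0 [h0 H]].
    exists n0. split; [lia|]. intros na hna. apply H. lia.
  - intros na0 h0 Hmin. split; [apply feas; exact h0|].
    intros na nq hf. unfold feasible in hf. fold W in hf.
    pose proof (pos_INR nq). pose proof (pos_INR na).
    assert (hna : (Z.of_nat na <= na_max M b P)%Z).
    { unfold na_max, floorZ. apply floor_ge. rewrite <- INR_IZR_INZ. fold W.
      apply (Rmult_le_reg_l W); [lra|].
      replace (W * (P / W)) with P by (field; lra). nra. }
    assert (hnq : (nq <= nq_of M b P na)%nat).
    { unfold nq_of, floorZ.
      assert (Z.of_nat nq <= Int_part ((P - 2 ^ b * INR M * INR na) / (2 * INR M)))%Z.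
      { apply floor_ge. rewrite <- INR_IZR_INZ. fold W.
        apply (Rmult_le_reg_l (2 * INR M)); [lra|].
        replace (2 * INR M * ((P - W * INR na) / (2 * INR M))) with (P - W * INR na)
          by (field; lra). lra. }
      lia. }
    pose proof (Hmin na hna).
    pose proof (mse_mono M ra rq sa2 sq2 na _ _ hra hrq hsa hsq hnq).
    lra.
Qed.
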